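(* Let $u\in S$ and assume $\hat\sigma(u)>0$. Then there exists $\tau_0>0$ such that $\lambda(u+\tau\hat d(u))>\lambda(u)$ for all $\tau\in(0,\tau_0)$.
   Context: $T,G:\mathbb{R}^n\to\mathbb{R}^n$ are continuously differentiable; $S\subset\mathbb{R}^n$ is open with $\langle G(u),\psi\rangle>0$ for all $u\in S$ and all nonzero $\psi$ with nonnegative entries. For $u\in S$: $f_i(u)=T_i(u)/G_i(u)$, $\lambda(u)=\min_i f_i(u)$, $N(u)=\{i:f_i(u)=\lambda(u)\}=\{i_1<\dots<i_N\}$, $\mathcal{A}_{N(u)}(u)$ is the $n\times N$ matrix with columns $\nabla f_{i_1}(u),\dots,\nabla f_{i_N}(u)$. Let $\hat\alpha(u)$ be a minimizer of $\|\mathcal{A}_{N(u)}(u)\alpha\|^2$ over $\{\alpha\in\mathbb{R}^N:\alpha_k\ge0,\sum_k\alpha_k=1\}$, $\hat\sigma(u)=\|\mathcal{A}_{N(u)}(u)\hat\alpha(u)\|$, and, when $\hat\sigma(u)>0$, $\hat d(u)=\mathcal{A}_{N(u)}(u)\hat\alpha(u)/\|\mathcal{A}_{N(u)}(u)\hat\alpha(u)\|$. *)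

(* Defs.v *)
(* Points of R^n are column vectors 'cV[R]_n.+1
   (the dimension is n.+1 >= 1 so that lambda = min_i f_i is defined). *)
From HB Require Import structures.
From mathcomp Require Import all_boot all_order all_algebra.
From mathcomp Require Import all_classical all_reals all_analysis.
Set Implicit Arguments. Unset Strict Implicit. Unset Printing Implicit Defensive.
Import Order.TTheory GRing.Theory Num.Theory.
Import numFieldNormedType.Exports.
Local Open Scope classical_set_scope.
Local Open Scope ring_scope.

Section Defs.
Variables (R : realType) (n : nat).
Notation V := 'cV[R]_n.+1.

Definition ebasis (j : 'I_n.+1) : V := delta_mx j 0.

Definition C1map (F : V -> V) : Prop :=
  (forall x, differentiable F x) /\
  (forall (i j : 'I_n.+1),
      continuous (fun x => 'D_(ebasis j) (fun y => F y i 0) x)).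

Definition dotv (x y : V) : R := \sum_(i < n.+1) x i 0 * y i 0.
Definition enorm (m : nat) (x : 'cV[R]_m) : R :=
  Num.sqrt (\sum_(i < m) x i 0 ^+ 2).

Definition grad (h : V -> R) (u : V) : V :=
  \col_(j < n.+1) 'D_(ebasis j) h u.

Variables (T G : V -> V).

Definition fi (i : 'I_n.+1) (u : V) : R := T u i 0 / G u i 0.
Definition lam (u : V) : R := \big[Num.min/fi ord0 u]_(i < n.+1) fi i u.
Definition Nset (u : V) : {set 'I_n.+1} := [set i | fi i u == lam u].

(* the n x N matrix whose k-th column is grad f_{i_k}, i_1 < ... < i_N *)
Definition Amat (u : V) : 'M[R]_(n.+1, #|Nset u|) :=
  \matrix_(j < n.+1, k < #|Nset u|) grad (fi (enum_val k)) u j 0.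

Definition simplex (m : nat) (a : 'cV[R]_m) : Prop :=
  (forall k, 0 <= a k 0) /\ \sum_(k < m) a k 0 = 1.

Definition is_alpha_hat (u : V) (a : 'cV[R]_#|Nset u|) : Prop :=
  simplex a /\
  forall b : 'cV[R]_#|Nset u|, simplex b ->
    enorm (Amat u *m a) ^+ 2 <= enorm (Amat u *m b) ^+ 2.

Definition sigma_hat (u : V) (a : 'cV[R]_#|Nset u|) : R := enorm (Amat u *m a).
Definition d_hat (u : V) (a : 'cV[R]_#|Nset u|) : V :=
  (sigma_hat a)^-1 *: (Amat u *m a).
End Defs.

(* Main.v *)
Require Import Defs.
From HB Require Import structures.
From mathcomp Require Import all_boot all_order all_algebra.
From mathcomp Require Import all_classical all_reals all_analysis.
From mathcomp Require Import ring lra.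
Import Order.TTheory GRing.Theory Num.Theory.
Import numFieldNormedType.Exports.
Local Open Scope classical_set_scope.
Local Open Scope ring_scope.

Lemma enorm_sqr (R : realType) m (x : 'cV[R]_m) :
  enorm x ^+ 2 = \sum_(i < m) x i 0 ^+ 2.
Proof. by rewrite /enorm sqr_sqrtr // sumr_ge0 // => i _; rewrite sqr_ge0. Qed.

Lemma opt_cond (R : realType) m p (A : 'M[R]_(m, p)) (a : 'cV[R]_p)
  (ha : simplex a)
  (hmin : forall b : 'cV[R]_p, simplex b ->
     enorm (A *m a) ^+ 2 <= enorm (A *m b) ^+ 2) (k : 'I_p) :
  \sum_(j < m) (A *m a) j 0 ^+ 2 <= \sum_(j < m) (A *m a) j 0 * A j k.
Proof.
set w := A *m a.
pose z j := A j k - w j 0.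
pose P := \sum_(j < m) w j 0 * z j.
pose Q := \sum_(j < m) z j ^+ 2.
have Q0 : 0 <= Q by rewrite sumr_ge0 // => j _; rewrite sqr_ge0.
have key : forall t, 0 < t <= 1 -> 0 <= 2 * P + t * Q.
  move=> t /andP[t0 t1].
  pose b := (1 - t) *: a + t *: delta_mx k 0.
  have sb : simplex b.
    case: ha => ha1 ha2; split.
      move=> l; rewrite /b !mxE addr_ge0 // mulr_ge0 //; first by rewrite subr_ge0.
        by apply: ltW.
    rewrite (eq_bigr (fun l => (1-t) * a l 0 + t * delta_mx k (0:'I_1) l 0)); last first.
      by move=> l _; rewrite /b !mxE.
    rewrite big_split /= -!mulr_sumr ha2 (bigD1 k) //= big1 ?eqxx ?addr0 /=.
      rewrite /= mxE !eqxx /= mulr1; lra.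
    by move=> l /negbTE hl; rewrite mxE hl.
  have := hmin b sb; rewrite !enorm_sqr.
  have -> : A *m b = (1 - t) *: w + t *: col k A.
    by rewrite /b mulmxDr -!scalemxAr colE.
  rewrite -subr_ge0 -sumrB.
  have -> : \sum_(i < m) ((((1 - t) *: w + t *: col k A) i 0) ^+ 2 - w i 0 ^+ 2)
      = t * (2 * P + t * Q).
    rewrite /P /Q mulr_sumr mulrDr !mulr_sumr -big_split /=.
    apply: eq_bigr => j _; rewrite /z !mxE; ring.
  by rewrite pmulr_rge0.
have P0 : 0 <= P.
  rewrite leNgt; apply/negP => Pn.
  have QP : 0 < Q - P by rewrite subr_gt0 (lt_le_trans Pn).
  pose t := - P / (Q - P).
  have t0 : 0 < t by rewrite /t divr_gt0 // oppr_gt0.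
  have ht : t * (Q - P) = - P by rewrite /t divfK // gt_eqF.
  have t1 : t <= 1.
    rewrite -(ler_pM2r QP) mul1r ht lerBrDr; lra.
  have := key t; rewrite t0 t1 => /(_ isT).
  have tP : t * P < 0 by rewrite pmulr_rlt0.
  have -> : t * Q = - P + t * P by rewrite -ht mulrBr; ring.
  lra.
rewrite -subr_ge0.
have -> : \sum_(j < m) w j 0 * A j k - \sum_(j < m) w j 0 ^+ 2 = P.
  by rewrite /P /z -sumrB; apply: eq_bigr => j _; ring.
exact: P0.
Qed.

Lemma dnbhs_right (R : realType) (P : R -> Prop) :
  (\forall t \near 0^', P t) -> \forall t \near 0^'+, P t.
Proof.
rewrite !near_withinE; apply: filterS => t H t0; apply: H.
by rewrite /= gt_eqF.
Qed.

Lemma nbhs_right (R : realType) (P : R -> Prop) :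
  (\forall t \near (0:R), P t) -> \forall t \near 0^'+, P t.
Proof. by rewrite !near_withinE; apply: filterS => t H t0. Qed.

Lemma right_ex (R : realType) (P : R -> Prop) :
  (\forall t \near 0^'+, P t) -> exists e : R, 0 < e /\ forall t, 0 < t < e -> P t.
Proof.
rewrite near_withinE => /nbhs_ballP[e e0 H]; exists e; split => // t /andP[t0 te].
apply: H => //; rewrite -ball_normE /= sub0r normrN gtr0_norm //.
Qed.

Lemma lam_le (R : realType) n (T G : 'cV[R]_n.+1 -> 'cV[R]_n.+1) i v :
  lam T G v <= fi T G i v.
Proof. by rewrite /lam (bigD1 i) //= ge_min lexx. Qed.

Arguments dnbhs_right {R P}.
Arguments nbhs_right {R P}.
Arguments right_ex {R P}.
Arguments lam_le {R n T G}.

Theorem corollary3 (R : realType) (n : nat) (T G : 'cV[R]_n.+1 -> 'cV[R]_n.+1)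
  (S : set 'cV[R]_n.+1)
  (hT : C1map T) (hG : C1map G) (hS : open S)
  (hpos : forall u, S u -> forall psi : 'cV[R]_n.+1,
            (forall i, 0 <= psi i 0) -> psi != 0 -> 0 < dotv (G u) psi)
  (u : 'cV[R]_n.+1) (hu : S u)
  (alpha : 'cV[R]_#|Nset T G u|) (halpha : is_alpha_hat alpha)
  (hsig : 0 < sigma_hat alpha) :
  exists tau0 : R, 0 < tau0 /\
    forall tau : R, 0 < tau < tau0 ->
      lam T G u < lam T G (u + tau *: d_hat alpha).
Proof.
set d := d_hat alpha.
have Gpos : forall i, 0 < G u i 0.
  move=> i; have := hpos u hu (delta_mx i 0).
  have -> : dotv (G u) (delta_mx i 0) = G u i 0.
    rewrite /dotv (bigD1 i) //= big1 ?mxE ?eqxx ?mulr1 ?addr0 //.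
    by move=> j /negbTE hj; rewrite mxE hj mulr0.
  apply.
    by move=> j; rewrite mxE ler0n.
  apply/negP => /eqP /matrixP /(_ i 0); rewrite !mxE !eqxx /=.
  by apply/eqP; exact: oner_neq0.
have dfi : forall i, differentiable (fi T G i) u.
  move=> i.
  have -> : fi T G i = (fun y => T y i 0) * (fun y => (G y i 0)^-1) by [].
  apply: differentiableM.
    exact: (differentiable_comp (hT.1 u) (differentiable_coord _ i 0)).
  apply: differentiableV; last by rewrite gt_eqF.
  exact: (differentiable_comp (hG.1 u) (differentiable_coord _ i 0)).
have Dlin : forall f : 'cV[R]_n.+1 -> R, differentiable f u ->
    forall v, 'D_v f u = \sum_j grad f u j 0 * v j 0.
  move=> f df v; rewrite deriveE //.
  rewrite {1}(matrix_sum_delta v) linear_sum /=; apply: eq_bigr => j _.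
  rewrite big_ord1 linearZ /= mxE deriveE //.
  by rewrite /ebasis mulrC.
have hopt := @opt_cond R _ _ (Amat T G u) alpha halpha.1 halpha.2.
have Dpos : forall i, i \in Nset T G u -> 0 < 'D_d (fi T G i) u.
  move=> i iN; pose k := enum_rank_in iN i.
  have ek : enum_val k = i by rewrite /k enum_rankK_in.
  rewrite Dlin //.
  have -> : \sum_j grad (fi T G i) u j 0 * d j 0 = (sigma_hat alpha)^-1 *
      \sum_j (Amat T G u *m alpha) j 0 * Amat T G u j k.
    rewrite mulr_sumr; apply: eq_bigr => j _.
    rewrite /d /d_hat [d_hat _ _ _]lock [X in _ = _ * (_ * X)]mxE ek -lock mxE; rewrite /d_hat mxE; ring.
  apply: mulr_gt0; first by rewrite invr_gt0.
  apply: lt_le_trans (hopt k).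
  by rewrite -enorm_sqr exprn_gt0.
have near_all : forall i, \forall t \near 0^'+, lam T G u < fi T G i (t *: d + u).
  move=> i; case: (boolP (i \in Nset T G u)) => iN.
    have dv := @diff_derivable R _ _ _ _ d (dfi i).
    have H := @cvgr_gt R _ _ _ _ ('D_d (fi T G i) u) dv 0 (Dpos i iN).
    apply: filterS2 (dnbhs_right (H _)) (nbhs_right_gt 0) => t Ht t0.
    move: iN; rewrite inE => /eqP <-.
    move: Ht => /=; rewrite -[_ *: _]/(_ * _) pmulr_rgt0 ?invr_gt0 // subr_gt0.
    done.
  have lt : lam T G u < fi T G i u.
    by rewrite lt_neqAle lam_le andbT; move: iN; rewrite inE eq_sym.
  have c : {for 0, continuous (fun h : R => fi T G i (h *: d + u))}.
    apply: differentiable_continuous.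
    apply: (@differentiable_comp _ _ _ _ (fun h : R => h *: d + u) (fi T G i)).
      apply: differentiableD => //; exact: differentiableZl.
    by rewrite /= scale0r add0r.
  have lt' : lam T G u < fi T G i (0 *: d + u) by rewrite scale0r add0r.
  have H := @cvgr_gt R _ _ _ _ _ c (lam T G u) lt'.
  exact: nbhs_right (H _).
have [e [e0 He]] := right_ex (filter_forall _ near_all).
exists e; split => // t ht; have Hi := He t ht.
rewrite /lam; apply: (big_ind (fun x => lam T G u < x)).
- by rewrite addrC; apply: Hi.
- by move=> x y hx hy; rewrite lt_min hx hy.
- by move=> j _; rewrite addrC; apply: Hi.
Qed.
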